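(* Let $E$ be a Banach lattice with an order continuous norm, let $\mathfrak{B}$ be a Boolean subalgebra of $\mathfrak{B}(E)$, and let $T\colon E\to E$ be a $\mathfrak{B}$-Volterra operator with $T\le I_E$. Then the operator $\pi-\pi T+\pi^*T$ is $\mathfrak{B}$-Volterra for every $\pi\in\mathfrak{B}$. Further, if $\pi\in\mathfrak{B}$ satisfies $\pi T=\pi$, then the operator $I_E+\pi-T$ is $\mathfrak{B}$-Volterra.
   Context: $\mathfrak{B}(E)$ is the Boolean algebra of all order projections on $E$ ($\pi\le\rho$ iff $\pi\rho=\pi$, $\pi\wedge\rho=\pi\rho$, $\pi^*=I_E-\pi$, zero $\mathbf 0$, unit $\mathbf 1=I_E$). A positive operator $T\colon E\to E$ is $\mathfrak{B}$-Volterra if for all $\pi\in\mathfrak{B}$ and $x,y\in E$, $\pi x=\pi y$ implies $\pi Tx=\pi Ty$. $T\le I_E$ refers to the usual order on operators ($I_E-T$ positive). *)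

(* Defs.v *)
From HB Require Import structures.
From mathcomp Require Import all_boot all_order all_algebra.
From mathcomp Require Import all_classical all_reals.
From mathcomp Require Import topology normedtype.
Set Implicit Arguments. Unset Strict Implicit. Unset Printing Implicit Defensive.
Import Order.TTheory GRing.Theory Num.Theory.
Import numFieldNormedType.Exports.
Local Open Scope ring_scope.

(* A Banach lattice structure on a real Banach space E: a vector-lattice
   order (partial order compatible with the linear structure, with binary
   suprema) whose norm is a lattice norm ( |x| <= |y| -> ||x|| <= ||y|| ). *)
Record BanachLattice (R : realType) (E : completeNormedModType R) := {
  ble : E -> E -> Prop;
  ble_refl : forall x, ble x x;
  ble_trans : forall x y z, ble x y -> ble y z -> ble x z;
  ble_anti : forall x y, ble x y -> ble y x -> x = y;
  ble_add : forall x y z, ble x y -> ble (x + z) (y + z);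
  ble_scale : forall (a : R) x y, 0 <= a -> ble x y -> ble (a *: x) (a *: y);
  bjoin : E -> E -> E;
  bjoin_ub1 : forall x y, ble x (bjoin x y);
  bjoin_ub2 : forall x y, ble y (bjoin x y);
  bjoin_least : forall x y z, ble x z -> ble y z -> ble (bjoin x y) z;
  bnorm_lattice : forall x y,
    ble (bjoin x (- x)) (bjoin y (- y)) -> `|x| <= `|y|
}.

Section Defs.
Variables (R : realType) (E : completeNormedModType R) (L : BanachLattice E).

Definition lpos (x : E) := ble L 0 x.

(* Order continuity of the norm: for every downward directed set D with
   infimum 0 (i.e. a net decreasing to 0), inf_{x in D} ||x|| = 0. *)
Definition order_continuous_norm : Prop :=
  forall D : set E,
    (exists x, D x) ->
    (forall x y, D x -> D y -> exists2 z, D z & ble L z x /\ ble L z y) ->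
    (forall x, D x -> ble L 0 x) ->
    (forall l, (forall x, D x -> ble L l x) -> ble L l 0) ->
    forall e : R, 0 < e -> exists2 x, D x & `|x| < e.

Definition linear_op (T : E -> E) : Prop :=
  forall (a : R) x y, T (a *: x + y) = a *: T x + T y.

Definition positive_op (T : E -> E) : Prop :=
  linear_op T /\ forall x, lpos x -> lpos (T x).

Definition op_le (S T : E -> E) : Prop :=
  positive_op (fun x => T x - S x).

Definition order_projection (p : E -> E) : Prop :=
  linear_op p /\ (forall x, p (p x) = p x) /\
  (forall x, lpos x -> lpos (p x)) /\ (forall x, lpos x -> ble L (p x) x).

Definition pcompl (p : E -> E) : E -> E := fun x => x - p x.

Definition boolean_subalgebra (B : set (E -> E)) : Prop :=
  (forall p, B p -> order_projection p) /\
  B (fun _ => 0) /\ B id /\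
  (forall p q, B p -> B q -> B (p \o q)) /\
  (forall p, B p -> B (pcompl p)).

Definition volterra (B : set (E -> E)) (T : E -> E) : Prop :=
  positive_op T /\
  forall p x y, B p -> p x = p y -> p (T x) = p (T y).

End Defs.

(* Main.v *)
Require Import Defs.
From HB Require Import structures.
From mathcomp Require Import all_boot all_order all_algebra.
From mathcomp Require Import all_classical all_reals.
From mathcomp Require Import topology normedtype.
Import Order.TTheory GRing.Theory Num.Theory.
Import numFieldNormedType.Exports.
Local Open Scope ring_scope.

Lemma zm1 (V : zmodType) (a1 a2 b1 b2 c1 c2 : V) :
  (a1 + a2) - (b1 + b2) + ((c1 + c2) - (b1 + b2)) =
  (a1 - b1 + (c1 - b1)) + (a2 - b2 + (c2 - b2)).
Proof. by rewrite !opprD (addrACA a1) (addrACA c1) (addrACA (a1 - b1)). Qed.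

Lemma zm2 (V : zmodType) (a1 a2 b1 b2 c1 c2 : V) :
  (a1 + a2) + (b1 + b2) - (c1 + c2) = (a1 + b1 - c1) + (a2 + b2 - c2).
Proof. by rewrite opprD (addrACA a1) (addrACA (a1 + b1)). Qed.

Section H.
Variables (R : realType) (E : completeNormedModType R) (L : BanachLattice E).

Lemma lin0 (f : E -> E) : linear_op f -> f 0 = 0.
Proof.
move=> lf; have := lf 1 0 0; rewrite !scale1r addr0 => h.
by apply: (addrI (f 0)); rewrite addr0 -h.
Qed.

Lemma linD (f : E -> E) x y : linear_op f -> f (x + y) = f x + f y.
Proof. by move=> lf; have := lf 1 x y; rewrite !scale1r. Qed.

Lemma linN (f : E -> E) x : linear_op f -> f (- x) = - f x.
Proof.
move=> lf; have := lf (-1) x 0; rewrite !addr0 (lin0 _ lf) addr0.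
by rewrite !scaleN1r.
Qed.

Lemma linB (f : E -> E) x y : linear_op f -> f (x - y) = f x - f y.
Proof. by move=> lf; rewrite linD // linN. Qed.

Lemma ble_pos_add u v : lpos L u -> lpos L v -> lpos L (u + v).
Proof.
move=> hu hv; apply: (ble_trans hv); have := ble_add v hu.
by rewrite add0r addrC.
Qed.

Lemma ble_sub u v : ble L u v -> lpos L (v - u).
Proof. by move=> h; have := ble_add (- u) h; rewrite subrr. Qed.

Lemma key (B : set (E -> E)) p q z : boolean_subalgebra L B -> B p -> B q ->
  q z = 0 -> q (p z) = 0.
Proof.
move=> [hop [_ [_ [hcomp hcompl]]]] Bp Bq qz.
have Br : B (q \o (p \o pcompl q)) by apply: (hcomp) => //; apply: (hcomp) => //; apply: (hcompl).
have [lr [idr _]] := hop _ Br.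
have [lq [idq _]] := hop _ Bq.
have [lp _] := hop _ Bp.
have r0 : forall x, q (p (pcompl q x)) = 0.
  move=> x; have := idr x; rewrite /= => <-.
  by rewrite {1}/pcompl idq subrr (lin0 _ lp) (lin0 _ lq).
have := r0 z; by rewrite /pcompl qz subr0.
Qed.

Lemma volt_char (B : set (E -> E)) F : linear_op F ->
  (forall q z, B q -> q z = 0 -> q (F z) = 0) ->
  boolean_subalgebra L B ->
  forall q x y, B q -> q x = q y -> q (F x) = q (F y).
Proof.
move=> lF h [hop _] q x y Bq qxy.
have [lq _] := hop _ Bq.
apply/eqP; rewrite -subr_eq0 -(linB _ _ _ lq) -(linB _ _ _ lF); apply/eqP.
by apply: h => //; rewrite (linB _ _ _ lq) qxy subrr.
Qed.

End H.
Arguments lin0 {R E f}.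
Arguments linD {R E f x y}.
Arguments linN {R E f x}.
Arguments linB {R E f x y}.
Arguments key {R E L B p q z}.


Theorem theorem3p11 (R : realType) (E : completeNormedModType R)
  (L : BanachLattice E) (B : set (E -> E)) (T : E -> E) :
  order_continuous_norm L ->
  boolean_subalgebra L B ->
  volterra L B T ->
  op_le L T id ->
  (forall p, B p ->
     volterra L B (fun x => p x - p (T x) + pcompl p (T x))) /\
  (forall p, B p -> (forall x, p (T x) = p x) ->
     volterra L B (fun x => x + p x - T x)).
Proof.
move=> _ hB [[lT posT] vT] [_ posIT].
have hop := hB.1.
have Tz : forall q z, B q -> q z = 0 -> q (T z) = 0.
  move=> q z Bq qz; have [lq _] := hop _ Bq.
  rewrite (vT q z 0 Bq); last by rewrite qz (lin0 lq).
  by rewrite (lin0 lT) (lin0 lq).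
split.
- move=> p Bp; have [lp [_ [posp lep]]] := hop _ Bp.
  have lF : linear_op (fun x => p x - p (T x) + pcompl p (T x)).
    move=> a x y; rewrite /pcompl !lT !lp.
    by rewrite zm1 !scalerDr !scalerN.
  split; first split => //.
    move=> x hx; apply: ble_pos_add.
      by rewrite -(linB lp); apply: posp; apply: posIT.
    by apply: ble_sub; apply: lep; apply: posT.
  apply: (@volt_char _ _ L B _ lF _ hB) => q z Bq qz.
  have [lq _] := hop _ Bq.
  rewrite /pcompl !(linD lq) !(linN lq) (key hB Bp Bq qz).
  by rewrite (key hB Bp Bq (Tz q z Bq qz)) (Tz q z Bq qz) !subrr add0r.
- move=> p Bp _; have [lp [_ [posp lep]]] := hop _ Bp.
  have lF : linear_op (fun x => x + p x - T x).
    move=> a x y; rewrite !lT !lp.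
    by rewrite zm2 !scalerDr !scalerN.
  split; first split => //.
    move=> x hx; rewrite addrAC; apply: ble_pos_add.
      by apply: posIT.
    by apply: posp.
  apply: (@volt_char _ _ L B _ lF _ hB) => q z Bq qz.
  have [lq _] := hop _ Bq.
  by rewrite (linB lq) (linD lq) qz (key hB Bp Bq qz) (Tz q z Bq qz) addr0 subr0.
Qed.
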